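(* Let $E$ be a finite directed graph and let $A$ be either the path algebra $KE$ or the Leavitt path algebra $L_K(E)$, each with its standard filtration. Then $A$ belongs to exactly one of the following classes: Class 0 ($A$ is finite-dimensional); Class 1 ($A$ is infinite-dimensional with $\mathrm{GKdim}(A)<\infty$); Class 2 ($\mathrm{GKdim}(A)=\infty$ and $\mathrm{h}_{\mathrm{alg}}(A)<\infty$). In particular $\mathrm{h}_{\mathrm{alg}}(A)<\infty$.
   Context: A finite directed graph $E=(E^0,E^1,s,r)$ has finitely many vertices and edges, with source and range maps $s,r:E^1\to E^0$. Paths are finite sequences $e_1\cdots e_n$ of edges with $r(e_i)=s(e_{i+1})$; vertices are paths of length $0$. The path algebra $KE$ over a field $K$ has basis all paths with concatenation product (zero when not composable); its standard filtration $V_n$ is the span of paths of length $\le n$. The Leavitt path algebra $L_K(E)$ is the $K$-algebra generated by $E^0\cup E^1\cup\{e^*:e\in E^1\}$ subject to: $vw=\delta_{v,w}v$ for vertices; $s(e)e=e=er(e)$ and $r(e)e^*=e^*=e^*s(e)$; $e^*f=\delta_{e,f}r(e)$ for $e,f\in E^1$; $\sum_{s(e)=v}ee^*=v$ for every vertex $v$ with $0<|s^{-1}(v)|<\infty$. Its standard filtration $W_n$ is the span of elements $\lambda\mu^*$ with $\lambda,\mu$ paths and $l(\lambda)+l(\mu)\le n$. For a filtration $\{V_n\}$ of an algebra $A$, $\mathrm{h}_{\mathrm{alg}}(A)=0$ if $A$ is finite-dimensional and $\limsup_n\frac1n\log\dim(V_n/V_{n-1})$ otherwise. The Gelfand–Kirillov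 dimension is $\mathrm{GKdim}(A)=\limsup_{n\to\infty}\log\dim(V^n)/\log n$, where $V$ is any finite-dimensional generating subspace and $V^n$ is the span of products of at most $n$ elements of $V$. *)

(* Defs.v *)
From HB Require Import structures.
From mathcomp Require Import all_boot all_order all_algebra.
From mathcomp Require Import boolp reals ereal exp sequences.
Set Implicit Arguments. Unset Strict Implicit. Unset Printing Implicit Defensive.
Import Order.TTheory GRing.Theory Num.Theory.
Local Open Scope ring_scope.

Section LinAlg.
Variables (K : fieldType) (A : lmodType K).

Definition free_seq (l : seq A) : Prop :=
  forall c : nat -> K, \sum_(i < size l) c i *: l`_i = 0 ->
    forall i, (i < size l)%N -> c i = 0.

Definition in_span (l : seq A) (a : A) : Prop :=
  exists c : nat -> K, a = \sum_(i < size l) c i *: l`_i.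

Definition dimspan (l : seq A) : nat :=
  \max_(d < (size l).+1 | `[< exists t, subseq t l /\ size t = d /\ free_seq t >]) d.

Definition fin_dim : Prop := exists l : seq A, forall a : A, in_span l a.

Definition is_alg (mul : A -> A -> A) : Prop :=
  [/\ forall x y z, mul x (mul y z) = mul (mul x y) z,
      forall x y z, mul (x + y) z = mul x z + mul y z,
      forall x y z, mul x (y + z) = mul x y + mul x z,
      forall k x y, mul (k *: x) y = k *: mul x y
    & forall k x y, mul x (k *: y) = k *: mul x y].

Definition mprod (mul : A -> A -> A) (d : A) (l : seq A) : A :=
  if l is x :: l' then foldl mul x l' else d.

End LinAlg.

Definition alg_hom (K : fieldType) (A B : lmodType K)
  (mulA : A -> A -> A) (mulB : B -> B -> B) (f : A -> B) : Prop :=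
  (forall k x y, f (k *: x + y) = k *: f x + f y) /\
  (forall x y, f (mulA x y) = mulB (f x) (f y)).

Section Growth.
Variables (R : realType) (K : fieldType) (A : lmodType K) (mul : A -> A -> A).
Local Open Scope ereal_scope.

(* products of (k+1) elements of gens *)
Fixpoint prods (gens : seq A) (k : nat) : seq A :=
  match k with
  | 0 => gens
  | k'.+1 => [seq mul x y | x <- gens, y <- prods gens k']
  end.

(* spanning list of V^n : products of at most n (and at least 1) elements of gens *)
Definition pow_span (gens : seq A) (n : nat) : seq A :=
  flatten [seq prods gens k | k <- iota 0 n].

Definition GKdim (gens : seq A) : \bar R :=
  limn_esup (fun n : nat =>
    ((ln ((dimspan (pow_span gens n))%:R : R)) / ln (n%:R : R))%:E).

Definition grdim (filt : nat -> seq A) (n : nat) : nat :=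
  (dimspan (filt n) - (if n is n'.+1 then dimspan (filt n') else 0))%N.

Definition h_alg (filt : nat -> seq A) : \bar R :=
  if `[< fin_dim A >] then 0
  else limn_esup (fun n : nat =>
    if grdim filt n == 0%N then -oo
    else ((ln ((grdim filt n)%:R : R)) / (n%:R : R))%:E).

Definition class0 : Prop := fin_dim A.
Definition class1 (filt : nat -> seq A) : Prop :=
  ~ fin_dim A /\ GKdim (filt 1%N) < +oo.
Definition class2 (filt : nat -> seq A) : Prop :=
  GKdim (filt 1%N) = +oo /\ h_alg filt < +oo.

Definition exactly_one (P Q S : Prop) : Prop :=
  (P /\ ~ Q /\ ~ S) \/ (~ P /\ Q /\ ~ S) \/ (~ P /\ ~ Q /\ S).

Definition classified (filt : nat -> seq A) : Prop :=
  exactly_one class0 (class1 filt) (class2 filt) /\ h_alg filt < +oo.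

End Growth.

Section Graph.
Variables (V Ed : finType) (s r : Ed -> V).

(* a path is a pair (v, [e1;...;en]) starting at v; n = 0 gives the vertex v *)
Fixpoint is_walk (v : V) (w : seq Ed) : bool :=
  if w is e :: w' then (s e == v) && is_walk (r e) w' else true.

Definition is_path (p : V * seq Ed) : bool := is_walk p.1 p.2.

Definition path_end (p : V * seq Ed) : V := last p.1 (map r p.2).

Fixpoint words (n : nat) : seq (seq Ed) :=
  if n is n'.+1 then [seq e :: w | e <- enum Ed, w <- words n'] else [:: [::]].

Definition paths_of_len (k : nat) : seq (V * seq Ed) :=
  [seq p <- [seq (v, w) | v <- enum V, w <- words k] | is_path p].

Definition paths_le (n : nat) : seq (V * seq Ed) :=
  flatten [seq paths_of_len k | k <- iota 0 n.+1].

Section PathAlg.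
Variables (K : fieldType) (A : lmodType K) (mul : A -> A -> A)
          (pa : V * seq Ed -> A).

Definition is_path_algebra : Prop :=
  [/\ is_alg mul,
      forall ps : seq (V * seq Ed), uniq ps -> all is_path ps -> free_seq (map pa ps),
      forall a : A, exists ps, all is_path ps /\ in_span (map pa ps) a
    & forall p q, is_path p -> is_path q ->
        mul (pa p) (pa q) = if path_end p == q.1 then pa (p.1, p.2 ++ q.2) else 0].

Definition KE_filt (n : nat) : seq A := map pa (paths_le n).
End PathAlg.

Definition lpa_rels (K : fieldType) (B : lmodType K) (mulB : B -> B -> B)
  (vb : V -> B) (eb gb : Ed -> B) : Prop :=
  [/\ forall v w, mulB (vb v) (vb w) = if v == w then vb v else 0,
      forall e, mulB (vb (s e)) (eb e) = eb e /\ mulB (eb e) (vb (r e)) = eb e,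
      forall e, mulB (vb (r e)) (gb e) = gb e /\ mulB (gb e) (vb (s e)) = gb e,
      forall e f, mulB (gb e) (eb f) = if e == f then vb (r e) else 0
    & forall v, (exists e, s e = v) ->
        \sum_(e | s e == v) mulB (eb e) (gb e) = vb v].

Section Leavitt.
Variables (K : fieldType) (A : lmodType K) (mul : A -> A -> A)
          (vert : V -> A) (ed gh : Ed -> A).

Definition is_leavitt : Prop :=
  [/\ is_alg mul, lpa_rels mul vert ed gh
    & forall (B : lmodType K) (mulB : B -> B -> B) (vb : V -> B) (eb gb : Ed -> B),
        is_alg mulB -> lpa_rels mulB vb eb gb ->
        (exists f : A -> B, [/\ alg_hom mul mulB f, forall v, f (vert v) = vb v,
                               forall e, f (ed e) = eb e & forall e, f (gh e) = gb e])
        /\ (forall f g : A -> B, alg_hom mul mulB f -> alg_hom mul mulB g ->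
              (forall v, f (vert v) = g (vert v)) -> (forall e, f (ed e) = g (ed e)) ->
              (forall e, f (gh e) = g (gh e)) -> forall x, f x = g x)].

Definition lpath (p : V * seq Ed) : A := mprod mul (vert p.1) (map ed p.2).
Definition lghost (p : V * seq Ed) : A := mprod mul (vert p.1) (map gh (rev p.2)).

(* standard filtration: W_n = span of lambda mu^* with l(lambda)+l(mu) <= n *)
Definition LPA_filt (n : nat) : seq A :=
  [seq mul (lpath lm.1) (lghost lm.2)
  | lm <- [seq (l, m) | l <- paths_le n, m <- paths_le n]
  & (size lm.1.2 + size lm.2.2 <= n)%N].
End Leavitt.

End Graph.

(* Main.v *)
Require Import Defs.
From HB Require Import structures.
From mathcomp Require Import all_boot all_order all_algebra.
From mathcomp Require Import boolp classical_sets reals ereal topology normedtype exp sequences.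
Import Order.TTheory GRing.Theory Num.Theory.
Local Open Scope ring_scope.

Lemma esup_bounded (R : realType) (u : (\bar R)^nat) (C : R) (N0 : nat) :
  (forall n, (N0 <= n)%N -> (u n <= C%:E)%E) -> (limn_esup u < +oo)%E.
Proof.
move=> H; rewrite limn_esup_lim.
apply: (@le_lt_trans _ _ C%:E); last exact: ltry.
apply: lime_le; first exact: is_cvg_esups.
exists N0 => // m /= Hm; apply: ge_ereal_sup => _ [k /= Hk <-]; apply: H.
exact: leq_trans Hk.
Qed.

Lemma dimspan_size (K : fieldType) (A : lmodType K) (l : seq A) :
  (dimspan l <= size l)%N.
Proof.
by apply/bigmax_leqP => i _; rewrite -ltnS.
Qed.

Lemma steinitz (K : fieldType) (A : lmodType K) (l t : seq A) :
  free_seq t -> (forall j, (j < size t)%N -> in_span l t`_j) -> (size t <= size l)%N.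
Proof.
move=> Ht Hs; rewrite leqNgt; apply/negP => Hlt.
set m := size t in Ht Hs Hlt *; set N := size l in Hlt.
have [c Hc] := choice (fun j : 'I_m => Hs j (ltn_ord j)).
pose C : 'M[K]_(m, N) := \matrix_(j, i) c j i.
have nf : ~~ row_free C.
  rewrite /row_free; apply/negP => /eqP E.
  by move: (rank_leq_col C); rewrite E leqNgt Hlt.
have [i xnz] : exists i, row i (kermx C) != 0.
  case: (pselect (exists i, row i (kermx C) != 0)) => // H; exfalso.
  move: (kermx_eq0 C); rewrite (negbTE nf) => /eqP; apply.
  apply/row_matrixP => i; rewrite row0; have [//|h] := eqVneq (row i (kermx C)) 0; exfalso; apply: H; by exists i.
 set x := row i (kermx C) in xnz.
have xC : x *m C = 0 by rewrite -row_mul mulmx_ker row0.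
pose d k := if (k < m)%N =P true is ReflectT h then x 0 (Ordinal h) else 0.
have dE (j : 'I_m) : d j = x 0 j.
  rewrite /d; case: eqP => [h|]; last by rewrite ltn_ord.
  by congr (x 0 _); apply: val_inj.
have S : \sum_(j < m) d j *: t`_j = 0.
  transitivity (\sum_(j < m) \sum_(i < N) (x 0 j * c j i) *: l`_i).
    apply: eq_bigr => j _; rewrite dE (Hc j) scaler_sumr.
    by apply: eq_bigr => k _; rewrite scalerA.
  rewrite exchange_big /=; apply: big1 => k _.
  rewrite -scaler_suml.
  have -> : \sum_(j < m) x 0 j * c j k = (x *m C) 0 k.
    by rewrite !mxE; apply: eq_bigr => j _; rewrite !mxE.
  by rewrite xC mxE scale0r.
have := Ht d S; move=> H0; move/negP: xnz; apply.
apply/eqP/rowP => j; rewrite [RHS]mxE -dE; exact: H0.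
Qed.

Lemma dimspan_fin (K : fieldType) (A : lmodType K) (l0 l : seq A) :
  (forall a, in_span l0 a) -> (dimspan l <= size l0)%N.
Proof.
move=> H; apply/bigmax_leqP => d /asboolP [t [_ [<- Hf]]].
by apply: steinitz Hf _ => j _; apply: H.
Qed.

Lemma h_alg_fin (R : realType) (K : fieldType) (A : lmodType K)
  (filt : nat -> seq A) (P : nat) :
  (forall n, (0 < n)%N -> (size (filt n) <= P ^ n)%N) -> (h_alg R filt < +oo)%E.
Proof.
move=> HP; rewrite /h_alg; case: asboolP => _; first exact: ltry.
apply: (@esup_bounded _ _ (ln (P%:R : R)) 1) => n n0.
case: eqP => g0; first exact: leNye.
rewrite lee_fin.
have g1 : (0 < grdim filt n)%N by rewrite lt0n; apply/eqP.
have gP : (grdim filt n <= P ^ n)%N.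
  apply: leq_trans _ (HP n n0); rewrite /grdim; apply: leq_trans (leq_subr _ _) _; exact: dimspan_size.
have Pn : (0 < P ^ n)%N by apply: leq_trans gP.
rewrite ler_pdivrMr ?ltr0n //.
have -> : ln (P%:R : R) * n%:R = ln ((P ^ n)%:R).
  rewrite natrX lnXn ?mulr_natr //.
  by rewrite ltr0n; case: (P) Pn => //; rewrite exp0n.
by rewrite ler_ln ?posrE ?ltr0n // ler_nat.
Qed.

Lemma GK_fin (R : realType) (K : fieldType) (A : lmodType K) (mul : A -> A -> A)
  (gens : seq A) : fin_dim A -> (GKdim R mul gens < +oo)%E.
Proof.
move=> [l0 Hl0]; set D := size l0.
apply: (@esup_bounded _ _ (D%:R / ln (2%:R : R)) 2) => n n2; rewrite lee_fin.
set d := dimspan _.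
have dD : (d <= D)%N by apply: dimspan_fin.
have l2 : 0 < ln (2%:R : R) by rewrite ln_gt0 // ltr1n.
have ln0d : 0 <= ln (d%:R : R).
  case: (d) dD => [|d'] _; first by rewrite ln0.
  by rewrite ln_ge0 // ler1n.
have lndD : ln (d%:R : R) <= D%:R.
  case: (d) dD => [|d'] dD; first by rewrite ln0.
  apply: le_trans (ltW (ln_sublinear _)) _; first by rewrite ltr0n.
  by rewrite ler_nat.
apply: (@le_trans _ _ (ln (d%:R : R) / ln (2%:R : R))).
  apply: ler_wpM2l => //; rewrite lef_pV2 ?posrE //.
    by rewrite ler_ln ?posrE ?ltr0n ?ler_nat //; apply: leq_trans n2.
  by apply: lt_le_trans l2 _; rewrite ler_ln ?posrE ?ltr0n ?ler_nat //; apply: leq_trans n2.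
by apply: ler_wpM2r => //; rewrite invr_ge0 ltW.
Qed.

Section Sizes.
Variables (V Ed : finType) (s r : Ed -> V).

Lemma size_words k : size (words Ed k) = (#|Ed| ^ k)%N.
Proof.
elim: k => [|k IH] //=; rewrite size_allpairs IH -cardE expnS //.
Qed.

Lemma size_pol k : (size (paths_of_len s r k) <= #|V| * #|Ed| ^ k)%N.
Proof.
rewrite /paths_of_len size_filter (leq_trans (count_size _ _)) //.
by rewrite size_allpairs size_words -cardE.
Qed.

Lemma sumn_map_le (T : eqType) (f g : T -> nat) (L : seq T) :
  (forall x, x \in L -> (f x <= g x)%N) -> (sumn (map f L) <= sumn (map g L))%N.
Proof.
elim: L => //= x L IH H; apply: leq_add; first by apply: H; rewrite inE eqxx.
by apply: IH => y yL; apply: H; rewrite inE yL orbT.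
Qed.

Definition PB := (2 * (#|V|.+1) * (#|Ed|.+1))%N.

Lemma nat_bound a b {n} : (0 < n)%N -> (n.+1 * a * b ^ n <= (2 * a.+1 * b) ^ n)%N.
Proof.
move=> n0; rewrite !expnMn leq_mul2r; apply/orP; right.
apply: leq_mul; first exact: ltn_expl.
case: n n0 => // n _; apply: leq_trans (leqnSn a) _; rewrite expnS leq_pmulr // expn_gt0 ltn0Sn //.
Qed.

Lemma size_ple n : (0 < n)%N -> (size (paths_le s r n) <= PB ^ n)%N.
Proof.
move=> n0; rewrite /PB; apply: leq_trans _ (nat_bound #|V| (#|Ed|.+1) n0).
rewrite /paths_le size_flatten /shape -map_comp.
have -> : (n.+1 * #|V| * #|Ed|.+1 ^ n = sumn [seq #|V| * #|Ed|.+1 ^ n | k <- iota 0 n.+1])%N.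
  rewrite sumnE big_map big_const_seq count_predT size_iota iter_addn_0.
  by rewrite [RHS]mulnC mulnA.
apply: sumn_map_le => k kin /=.
rewrite (leq_trans (size_pol k)) // leq_mul2l; apply/orP; right.
apply: (@leq_trans (#|Ed|.+1 ^ k)); first by case: (k) => // k'; rewrite leq_exp2r.
apply: leq_pexp2l => //; move: kin; rewrite mem_iota; by case/andP.
Qed.
End Sizes.

Lemma size_lpa (V Ed : finType) (s r : Ed -> V) (K : fieldType) (A : lmodType K)
  (mul : A -> A -> A) (vert : V -> A) (ed gh : Ed -> A) n :
  (0 < n)%N -> (size (LPA_filt s r mul vert ed gh n) <= (PB V Ed * PB V Ed) ^ n)%N.
Proof.
move=> n0; rewrite /LPA_filt size_map size_filter (leq_trans (count_size _ _)) //.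
by rewrite size_allpairs expnMn leq_mul // size_ple.
Qed.

Lemma classify_gen (R : realType) (K : fieldType) (A : lmodType K) (mul : A -> A -> A)
  (filt : nat -> seq A) (P : nat) :
  (forall n, (0 < n)%N -> (size (filt n) <= P ^ n)%N) -> classified R mul filt.
Proof.
move=> HP; have hf := @h_alg_fin R _ _ _ _ HP; split => //.
rewrite /exactly_one /class0 /class1 /class2.
case: (pselect (fin_dim A)) => fd.
  left; split => //; split; first by case.
  by case=> GK _; move: (@GK_fin R _ _ mul (filt 1%N) fd); rewrite GK ltxx.
right; have [GK|GK] := eqVneq (GKdim R mul (filt 1%N)) +oo%E.
  right; split => //; split; last by [].
  by case=> _; rewrite GK ltxx.
left; split => //; split; first by split => //; rewrite ltey.
by case=> GK'; move: GK; rewrite GK' eqxx.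
Qed.

Theorem theorem5p16 (R : realType) (K : fieldType) (V Ed : finType) (s r : Ed -> V) :
  (forall (A : lmodType K) (mul : A -> A -> A) (pa : V * seq Ed -> A),
      is_path_algebra s r mul pa -> classified R mul (KE_filt s r pa)) /\
  (forall (A : lmodType K) (mul : A -> A -> A) (vert : V -> A) (ed gh : Ed -> A),
      is_leavitt s r mul vert ed gh -> classified R mul (LPA_filt s r mul vert ed gh)).
Proof.
split.
  move=> A mul pa _; apply: (@classify_gen _ _ _ _ _ (PB V Ed)) => n n0.
  by rewrite /KE_filt size_map size_ple.
move=> A mul vert ed gh _; apply: (@classify_gen _ _ _ _ _ (PB V Ed * PB V Ed)) => n n0.
exact: size_lpa.
Qed.
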